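(* Convolution $(\sigma,\tau)\mapsto\sigma*\tau$ is a Baire class 1 map from $\mathcal T\times\mathcal T$ to $\mathcal T$.
   Context: Standing setting: $(X,\|\cdot\|)$ is a separable infinite-dimensional Banach space and $d$ is a translation-invariant stable pseudometric on $X$ such that $\mathrm{Id}\colon(X,\|\cdot\|)\to(X,d)$ is a coarse equivalence. $\Delta$ is a countable $\|\cdot\|$-dense $\mathbb Q$-linear subspace of $X$; for $x\in\Delta$, $\bar x(\lambda,y)=d(\lambda x,y)$. $\mathcal T$ is the closure of $\{\bar x:x\in\Delta\}$ in $\mathbb R^{\mathbb Q\times\Delta}$ (pointwise topology, metrizable). For $\sigma,\tau\in\mathcal T$ with defining sequences $(x_n),(y_m)$ (i.e. $\bar x_n\to\sigma$, $\bar y_m\to\tau$), $\sigma*\tau=\lim_n\lim_m\overline{x_n+y_m}$. A map is Baire class 1 if preimages of open sets are $F_\sigma$. *)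

(* Defs.v *)
From Stdlib Require Import Reals List QArith Qcanon Qreals ClassicalEpsilon.
Open Scope R_scope.

Section Setting.
Context {X : Type} (plus : X -> X -> X) (scal : R -> X -> X) (zero : X)
        (norm : X -> R).

Definition vsub (x y : X) : X := plus x (scal (-1) y).

Definition is_vector_space : Prop :=
  (forall x y z, plus x (plus y z) = plus (plus x y) z) /\
  (forall x y, plus x y = plus y x) /\
  (forall x, plus x zero = x) /\
  (forall x, plus x (scal (-1) x) = zero) /\
  (forall a x y, scal a (plus x y) = plus (scal a x) (scal a y)) /\
  (forall a b x, scal (a + b) x = plus (scal a x) (scal b x)) /\
  (forall a b x, scal (a * b) x = scal a (scal b x)) /\
  (forall x, scal 1 x = x).

Definition is_norm : Prop :=
  (forall x, norm x = 0 -> x = zero) /\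
  (forall a x, norm (scal a x) = Rabs a * norm x) /\
  (forall x y, norm (plus x y) <= norm x + norm y).

Definition norm_complete : Prop :=
  forall u : nat -> X,
    (forall eps, eps > 0 -> exists N, forall n m, (n >= N)%nat -> (m >= N)%nat ->
        norm (vsub (u n) (u m)) < eps) ->
    exists l, forall eps, eps > 0 -> exists N, forall n, (n >= N)%nat ->
        norm (vsub (u n) l) < eps.

Definition is_banach : Prop := is_vector_space /\ is_norm /\ norm_complete.

Definition norm_separable : Prop :=
  exists s : nat -> X, forall x eps, eps > 0 -> exists n, norm (vsub x (s n)) < eps.

Fixpoint lsum (v : nat -> X) (c : nat -> R) (n : nat) : X :=
  match n with
  | O => zero
  | S k => plus (lsum v c k) (scal (c k) (v k))
  end.

Definition infinite_dimensional : Prop :=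
  forall n : nat, exists v : nat -> X,
    forall c : nat -> R, lsum v c n = zero -> forall i, (i < n)%nat -> c i = 0.

Context (d : X -> X -> R).

Definition is_pseudometric : Prop :=
  (forall x, d x x = 0) /\ (forall x y, 0 <= d x y) /\
  (forall x y, d x y = d y x) /\ (forall x y z, d x z <= d x y + d y z).

Definition translation_invariant : Prop :=
  forall x y z, d (plus x z) (plus y z) = d x y.

Definition d_bounded (u : nat -> X) : Prop :=
  exists x0 M, forall n, d (u n) x0 <= M.

Definition stable : Prop :=
  forall (u v : nat -> X) (a b : nat -> R) (l1 l2 : R),
    d_bounded u -> d_bounded v ->
    (forall n, Un_cv (fun m => d (u n) (v m)) (a n)) -> Un_cv a l1 ->
    (forall m, Un_cv (fun n => d (u n) (v m)) (b m)) -> Un_cv b l2 ->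
    l1 = l2.

Definition id_coarse_equivalence : Prop :=
  (forall r, exists s, forall x y, norm (vsub x y) <= r -> d x y <= s) /\
  (forall r, exists s, forall x y, d x y <= r -> norm (vsub x y) <= s).

Context (Delta : X -> Prop).

Definition countable_dense_Qsubspace : Prop :=
  Delta zero /\
  (forall x y, Delta x -> Delta y -> Delta (plus x y)) /\
  (forall (q : Qc) x, Delta x -> Delta (scal (Q2R (this q)) x)) /\
  (exists e : nat -> X, forall x, Delta x -> exists n, e n = x) /\
  (forall x eps, eps > 0 -> exists y, Delta y /\ norm (vsub x y) < eps).

(** Coordinates of R^(Q x Delta). *)
Definition Idx : Type := (Qc * {x : X | Delta x})%type.

Definition xbar (x : X) : Idx -> R :=
  fun p => d (scal (Q2R (this (fst p))) x) (proj1_sig (snd p)).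

(** T: closure of {xbar x : x in Delta} in the product (pointwise) topology. *)
Definition inT (s : Idx -> R) : Prop :=
  forall (F : list Idx) (eps : R), eps > 0 ->
    exists x, Delta x /\ forall p, In p F -> Rabs (xbar x p - s p) < eps.

Definition defining_seq (u : nat -> X) (s : Idx -> R) : Prop :=
  (forall n, Delta (u n)) /\ (forall p, Un_cv (fun n => xbar (u n) p) (s p)).

Definition conv_spec (s t r : Idx -> R) : Prop :=
  forall u v, defining_seq u s -> defining_seq v t ->
    exists g : nat -> Idx -> R,
      (forall n p, Un_cv (fun m => xbar (plus (u n) (v m)) p) (g n p)) /\
      (forall p, Un_cv (fun n => g n p) (r p)).

Definition conv (s t : Idx -> R) : Idx -> R :=
  epsilon (inhabits (fun _ : Idx => 0)) (conv_spec s t).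

End Setting.

(** Product topology on R^I and on R^I x R^I. *)
Definition close_on {I : Type} (F : list I) (eps : R) (f g : I -> R) : Prop :=
  forall p, In p F -> Rabs (g p - f p) < eps.

Definition open_fun {I : Type} (U : (I -> R) -> Prop) : Prop :=
  forall f, U f -> exists F eps, eps > 0 /\ forall g, close_on F eps f g -> U g.

Definition open_pair {I : Type} (W : (I -> R) -> (I -> R) -> Prop) : Prop :=
  forall f1 f2, W f1 f2 -> exists F1 F2 eps, eps > 0 /\
    forall g1 g2, close_on F1 eps f1 g1 -> close_on F2 eps f2 g2 -> W g1 g2.

Definition closed_pair {I : Type} (C : (I -> R) -> (I -> R) -> Prop) : Prop :=
  open_pair (fun f1 f2 => ~ C f1 f2).

(** f : A x A -> R^I (A a subset of R^I) is Baire class 1: the preimage of every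
    (relatively) open set is F_sigma in A x A (relative topology). *)
Definition baire1_on {I : Type} (A : (I -> R) -> Prop)
    (f : (I -> R) -> (I -> R) -> (I -> R)) : Prop :=
  forall V : (I -> R) -> Prop, open_fun V ->
    exists C : nat -> (I -> R) -> (I -> R) -> Prop,
      (forall k, closed_pair (C k)) /\
      (forall s t, A s -> A t -> (V (f s t) <-> exists k, C k s t)).

(* Main.v *)
Require Import Defs.
From Stdlib Require Import Reals List QArith Qcanon Qreals ClassicalEpsilon.
From Stdlib Require Import Rtopology Lra Lia ProofIrrelevance FunctionalExtensionality ZArith.
From Stdlib Require Cantor.
Open Scope R_scope.
Lemma fchoice {A B : Type} (P : A -> B -> Prop) :
  (forall a, exists b, P a b) -> exists f : A -> B, forall a, P a (f a).
Proof.
  intro H. exists (fun a => proj1_sig (constructive_indefinite_description _ (H a))).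
  intro a. exact (proj2_sig (constructive_indefinite_description _ (H a))).
Qed.

Lemma inv_small (e : R) : e > 0 -> exists N, forall n, (n >= N)%nat -> / INR (S n) < e.
Proof.
  intro He. destruct (archimed (/ e)) as [H1 _].
  assert (Hz: (0 <= up (/ e))%Z).
  { apply le_IZR. assert (0 < / e) by (apply Rinv_0_lt_compat; lra). simpl; lra. }
  exists (Z.to_nat (up (/ e))). intros n Hn.
  assert (HI : IZR (up (/ e)) <= INR n).
  { rewrite <- (Z2Nat.id (up (/e))) by exact Hz. rewrite <- INR_IZR_INZ. apply le_INR. lia. }
  rewrite S_INR.
  assert (0 < / e) by (apply Rinv_0_lt_compat; lra).
  assert (INR n + 1 > / e) by lra.
  replace e with (/ / e) by (field; lra).
  apply Rinv_lt_contravar; [ | lra].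
  apply Rmult_lt_0_compat; lra.
Qed.

Lemma inv_pos (n : nat) : 0 < / INR (S n).
Proof. apply Rinv_0_lt_compat. apply lt_0_INR. lia. Qed.

Lemma inv_le (m n : nat) : (m <= n)%nat -> / INR (S n) <= / INR (S m).
Proof.
  intro H. apply Rinv_le_contravar. apply lt_0_INR; lia. apply le_INR; lia.
Qed.

Lemma cv_sub (u : nat -> R) l (phi : nat -> nat) :
  (forall k, (k <= phi k)%nat) -> Un_cv u l -> Un_cv (fun k => u (phi k)) l.
Proof.
  intros Hp Hu eps He. destruct (Hu eps He) as [N HN]. exists N.
  intros n Hn. apply HN. specialize (Hp n). lia.
Qed.

Lemma prefix_bound (u : nat -> R) N : exists M, forall n, (n < N)%nat -> Rabs (u n) <= M.
Proof.
  induction N as [|N [M HM]].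
  - exists 0. intros; lia.
  - exists (Rmax M (Rabs (u N))). intros n Hn.
    destruct (Nat.eq_dec n N) as [->|Hne].
    + apply Rmax_r.
    + eapply Rle_trans; [apply HM; lia | apply Rmax_l].
Qed.

Lemma cv_bounded (u : nat -> R) l : Un_cv u l -> exists M, forall n, Rabs (u n) <= M.
Proof.
  intro H. destruct (H 1 Rlt_0_1) as [N HN].
  destruct (prefix_bound u N) as [M HM].
  exists (Rmax M (Rabs l + 1)). intro n.
  destruct (le_lt_dec N n) as [h|h].
  - specialize (HN n h). unfold Rdist in HN.
    eapply Rle_trans; [|apply Rmax_r].
    assert (Rabs (u n) <= Rabs (u n - l) + Rabs l).
    { replace (u n) with ((u n - l) + l) at 1 by ring. apply Rabs_triang. }
    lra.
  - eapply Rle_trans; [apply HM; exact h | apply Rmax_l].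
Qed.

Lemma lim_bounded (u : nat -> R) l M : Un_cv u l -> (forall n, Rabs (u n) <= M) -> Rabs l <= M.
Proof.
  intros H HM. destruct (Rle_dec (Rabs l) M) as [h|h]; auto.
  exfalso. assert (e : Rabs l - M > 0) by lra.
  destruct (H _ e) as [N HN]. specialize (HN N (le_n _)). unfold Rdist in HN.
  specialize (HM N).
  assert (Rabs l <= Rabs (u N - l) + Rabs (u N)).
  { replace l with (u N - (u N - l)) at 1 by ring.
    eapply Rle_trans; [apply Rabs_triang|]. rewrite Rabs_Ropp. lra. }
  lra.
Qed.

Definition cluster (u : nat -> R) l :=
  forall eps, eps > 0 -> forall N, exists n, (N <= n)%nat /\ Rabs (u n - l) < eps.

Lemma BW (u : nat -> R) M : (forall n, Rabs (u n) <= M) -> exists l, cluster u l.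
Proof.
  intro HM.
  destruct (Bolzano_Weierstrass u (fun c => -M <= c <= M) (compact_P3 (-M) M)) as [l Hl].
  { intro n. specialize (HM n). unfold Rabs in HM. destruct (Rcase_abs (u n)); lra. }
  exists l. intros eps He N.
  destruct (Hl (fun y => Rabs (y - l) < eps) N) as [p [Hp1 Hp2]].
  { exists (mkposreal eps He). intros y Hy. exact Hy. }
  exists p. auto.
Qed.

Lemma cluster_sub (u : nat -> R) l : cluster u l ->
  exists phi : nat -> nat, (forall k, (k <= phi k)%nat) /\ Un_cv (fun k => u (phi k)) l.
Proof.
  intro H.
  destruct (fchoice (fun k n => (k <= n)%nat /\ Rabs (u n - l) < / INR (S k))) as [phi Hphi].
  { intro k. apply H. apply inv_pos. }
  exists phi. split. intro k; apply Hphi.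
  intros eps He. destruct (inv_small eps He) as [N HN]. exists N. intros n Hn.
  unfold Rdist. destruct (Hphi n) as [_ h]. specialize (HN n Hn). lra.
Qed.

Lemma not_cv (u : nat -> R) l : ~ Un_cv u l ->
  exists eps, eps > 0 /\ forall N, exists n, (N <= n)%nat /\ eps <= Rabs (u n - l).
Proof.
  intro H. apply NNPP. intro H2. apply H. intros eps He.
  apply NNPP. intro H3. apply H2. exists eps. split; auto. intro N.
  apply NNPP. intro H4. apply H3. exists N. intros n Hn. unfold Rdist.
  apply Rnot_le_lt. intro h. apply H4. exists n. auto.
Qed.

Lemma far_cluster (u : nat -> R) M l eps : (forall n, Rabs (u n) <= M) ->
  (forall N, exists n, (N <= n)%nat /\ eps <= Rabs (u n - l)) ->
  exists l', cluster u l' /\ eps <= Rabs (l' - l).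
Proof.
  intros HM Hf.
  destruct (fchoice (fun N n => (N <= n)%nat /\ eps <= Rabs (u n - l)) Hf) as [g Hg].
  destruct (BW (fun k => u (g k)) M) as [l' Hl']. { intro; apply HM. }
  exists l'. split.
  - intros e He N. destruct (Hl' e He N) as [k [Hk1 Hk2]]. exists (g k).
    split; auto. destruct (Hg k). lia.
  - destruct (Rle_dec eps (Rabs (l' - l))) as [h|h]; auto. exfalso.
    assert (e : eps - Rabs (l' - l) > 0) by lra.
    destruct (Hl' _ e 0%nat) as [k [_ Hk]]. destruct (Hg k) as [_ Hk2].
    assert (Rabs (u (g k) - l) <= Rabs (u (g k) - l') + Rabs (l' - l)).
    { replace (u (g k) - l) with ((u (g k) - l') + (l' - l)) by ring. apply Rabs_triang. }
    lra.
Qed.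

Lemma conv_from_clusters (u : nat -> R) M L : (forall n, Rabs (u n) <= M) ->
  (forall phi l, (forall k, (k <= phi k)%nat) -> Un_cv (fun k => u (phi k)) l -> l = L) ->
  Un_cv u L.
Proof.
  intros HM Hc. destruct (classic (Un_cv u L)) as [h|h]; auto. exfalso.
  destruct (not_cv _ _ h) as [eps [He Hf]].
  destruct (far_cluster u M L eps HM Hf) as [l' [Hcl Hd]].
  destruct (cluster_sub _ _ Hcl) as [phi [Hp Hcv]].
  specialize (Hc phi l' Hp Hcv). subst. rewrite Rminus_diag, Rabs_R0 in Hd. lra.
Qed.

Lemma double_limit (A : nat -> nat -> R) (a b : nat -> R) (M : R) :
  (forall n m, Rabs (A n m) <= M) ->
  (forall n, Un_cv (fun m => A n m) (a n)) ->
  (forall m, Un_cv (fun n => A n m) (b m)) ->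
  (forall phi psi l1 l2, (forall k, (k <= phi k)%nat) -> (forall k, (k <= psi k)%nat) ->
      Un_cv (fun k => a (phi k)) l1 -> Un_cv (fun k => b (psi k)) l2 -> l1 = l2) ->
  exists L, Un_cv a L /\ Un_cv b L.
Proof.
  intros HA Ha Hb Hs.
  assert (Hba : forall n, Rabs (a n) <= M) by (intro n; eapply lim_bounded; [apply Ha| intro; apply HA]).
  assert (Hbb : forall m, Rabs (b m) <= M) by (intro m; eapply lim_bounded; [apply Hb| intro; apply HA]).
  destruct (BW b M Hbb) as [lb Hlb]. destruct (cluster_sub _ _ Hlb) as [psi [Hpsi Hcpsi]].
  assert (Hcva : Un_cv a lb).
  { apply (conv_from_clusters a M lb Hba). intros phi l Hp Hc. exact (Hs phi psi l lb Hp Hpsi Hc Hcpsi). }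
  exists lb. split; auto.
  apply (conv_from_clusters b M lb Hbb). intros psi' l Hp Hc.
  symmetry. apply (Hs (fun k => k) psi' lb l); auto.
Qed.

Definition enQ (n : nat) : Qc :=
  let (a, r) := Cantor.of_nat n in let (b, c) := Cantor.of_nat r in
  Q2Qc (Qmake (Z.of_nat a - Z.of_nat b) (Pos.of_nat c)).

Lemma enQ_surj q : exists n, enQ n = q.
Proof.
  destruct q as [[z p] Hq].
  exists (Cantor.to_nat (Z.to_nat z, Cantor.to_nat (Z.to_nat (- z), Pos.to_nat p))).
  unfold enQ. rewrite !Cantor.cancel_of_to. rewrite Pos2Nat.id.
  replace (Z.of_nat (Z.to_nat z) - Z.of_nat (Z.to_nat (- z)))%Z with z by lia.
  apply Qc_is_canon. exact (Qred_correct (z # p)).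
Qed.

Section Main.
Context {X : Type} (plus : X -> X -> X) (scal : R -> X -> X) (zero : X) (norm : X -> R)
  (d : X -> X -> R) (Delta : X -> Prop).
Context (HV : is_vector_space plus scal zero) (Hd : is_pseudometric d)
  (Hti : translation_invariant plus d) (Hst : stable d).
Context (Hz : Delta zero) (Hplus : forall x y, Delta x -> Delta y -> Delta (plus x y))
  (Hscal : forall (q : Qc) x, Delta x -> Delta (scal (Q2R (this q)) x))
  (e : nat -> X) (He : forall x, Delta x -> exists n, e n = x).

Let xb := xbar scal d Delta.

Lemma plus_cancel a b : plus (plus a b) (scal (-1) a) = b.
Proof.
  destruct HV as [Has [Hc [H0 [Hi _]]]].
  rewrite (Hc a b), <- Has, Hi, H0. reflexivity.
Qed.

Lemma zero_plus z : plus zero z = z.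
Proof. destruct HV as [Has [Hc [H0 _]]]. rewrite Hc, H0. reflexivity. Qed.

Lemma neg_plus z : plus (scal (-1) z) z = zero.
Proof. destruct HV as [Has [Hc [H0 [Hi _]]]]. rewrite Hc, Hi. reflexivity. Qed.

Lemma Q2R_m1 : Q2R (this (Q2Qc (-1 # 1))) = -1.
Proof. simpl. unfold Q2R. simpl. lra. Qed.

Lemma Delta_neg x : Delta x -> Delta (scal (-1) x).
Proof. intro H. rewrite <- Q2R_m1. apply Hscal, H. Qed.

Definition shz (x : X) (p : Idx Delta) : X :=
  plus (proj1_sig (snd p)) (scal (-1) (scal (Q2R (this (fst p))) x)).

Definition shx (x : X) (p : Idx Delta) : Idx Delta :=
  match excluded_middle_informative (Delta (shz x p)) with
  | left H => (fst p, exist _ (shz x p) H)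
  | right _ => p
  end.

Lemma shx_fst x p : fst (shx x p) = fst p.
Proof. unfold shx. destruct excluded_middle_informative; reflexivity. Qed.

Lemma shx_snd x p : Delta x -> proj1_sig (snd (shx x p)) = shz x p.
Proof.
  intro Hx. unfold shx. destruct excluded_middle_informative as [h|h]; [reflexivity|].
  exfalso. apply h. unfold shz. apply Hplus. apply (proj2_sig (snd p)).
  apply Delta_neg, Hscal, Hx.
Qed.

Lemma xb_plus x w p : Delta x -> xb (plus x w) p = xb w (shx x p).
Proof.
  intro Hx. unfold xb, xbar. rewrite shx_fst, shx_snd by exact Hx. unfold shz.
  destruct HV as [_ [_ [_ [_ [Hd1 _]]]]]. rewrite Hd1.
  set (a := scal (Q2R (this (fst p))) x). set (b := scal (Q2R (this (fst p))) w).
  rewrite <- (Hti (plus a b) (proj1_sig (snd p)) (scal (-1) a)).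
  rewrite plus_cancel. reflexivity.
Qed.

Lemma xb_plus' x w p : Delta w -> xb (plus x w) p = xb x (shx w p).
Proof.
  intro Hw. destruct HV as [_ [Hc _]]. rewrite Hc. apply xb_plus, Hw.
Qed.


Lemma cv_ext (u w : nat -> R) l : (forall n, u n = w n) -> Un_cv u l -> Un_cv w l.
Proof. intros H Hu eps Hep. destruct (Hu eps Hep) as [N HN]. exists N. intros n Hn. rewrite <- H. auto. Qed.

Lemma d_plus_y y w : d (plus y w) y = d w zero.
Proof.
  destruct HV as [_ [_ [_ [Hi _]]]].
  rewrite <- (Hti (plus y w) y (scal (-1) y)). rewrite plus_cancel, Hi. reflexivity.
Qed.

Lemma d_neg z : d (scal (-1) z) zero = d z zero.
Proof.
  destruct Hd as [_ [_ [Hsym _]]].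
  rewrite <- (Hti (scal (-1) z) zero z). rewrite neg_plus, zero_plus. apply Hsym.
Qed.

Lemma K1 u v s t p :
  defining_seq scal d Delta u s -> defining_seq scal d Delta v t ->
  (forall n, Un_cv (fun m => xb (plus (u n) (v m)) p) (t (shx (u n) p))) /\
  (forall m, Un_cv (fun n => xb (plus (u n) (v m)) p) (s (shx (v m) p))) /\
  exists L, Un_cv (fun n => t (shx (u n) p)) L /\ Un_cv (fun m => s (shx (v m) p)) L.
Proof.
  intros [Hu1 Hu2] [Hv1 Hv2].
  assert (Hi : forall n, Un_cv (fun m => xb (plus (u n) (v m)) p) (t (shx (u n) p))).
  { intro n. apply (cv_ext (fun m => xb (v m) (shx (u n) p))).
    intro m. symmetry. apply xb_plus, Hu1. apply Hv2. }
  assert (Hii : forall m, Un_cv (fun n => xb (plus (u n) (v m)) p) (s (shx (v m) p))).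
  { intro m. apply (cv_ext (fun n => xb (u n) (shx (v m) p))).
    intro n. symmetry. apply xb_plus', Hv1. apply Hu2. }
  split; [exact Hi|]. split; [exact Hii|].
  destruct Hd as [Hdd [Hpos [Hsym Htri]]].
  set (lam := Q2R (this (fst p))). set (y := proj1_sig (snd p)).
  set (U := fun n => scal lam (u n)). set (W := fun m => shz (v m) p).
  assert (HA : forall n m, xb (plus (u n) (v m)) p = d (U n) (W m)).
  { intros n m. rewrite xb_plus' by apply Hv1. unfold xb, xbar.
    rewrite shx_fst, shx_snd by apply Hv1. reflexivity. }
  set (p0 := (fst p, exist _ zero Hz) : Idx Delta).
  destruct (cv_bounded _ _ (Hu2 p0)) as [M1 HM1].
  destruct (cv_bounded _ _ (Hv2 p0)) as [M2 HM2].
  assert (HU : forall n, d (U n) zero <= M1).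
  { intro n. specialize (HM1 n). unfold xb, xbar in HM1. simpl in HM1.
    rewrite Rabs_pos_eq in HM1 by apply Hpos. exact HM1. }
  assert (HW : forall m, d (W m) y <= M2).
  { intro m. specialize (HM2 m). unfold xb, xbar in HM2. simpl in HM2.
    rewrite Rabs_pos_eq in HM2 by apply Hpos. unfold W, shz. fold y. fold lam.
    rewrite d_plus_y, d_neg. exact HM2. }
  apply (double_limit (fun n m => xb (plus (u n) (v m)) p) _ _ (M1 + d zero y + M2)).
  - intros n m. rewrite HA. rewrite Rabs_pos_eq by apply Hpos.
    pose proof (Htri zero y (W m)) as T2. rewrite (Hsym y (W m)) in T2.
    pose proof (Htri (U n) zero (W m)) as T1.
    specialize (HU n). specialize (HW m). lra.
  - exact Hi.
  - exact Hii.
  - intros phi psi l1 l2 Hphi Hpsi Hc1 Hc2.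
    apply (Hst (fun k => U (phi k)) (fun k => W (psi k))
              (fun k => t (shx (u (phi k)) p)) (fun k => s (shx (v (psi k)) p)) l1 l2).
    + exists zero, M1. intro; apply HU.
    + exists y, M2. intro; apply HW.
    + intro n. apply (cv_ext (fun m => xb (plus (u (phi n)) (v (psi m))) p)).
      intro; apply HA. apply (cv_sub (fun m => xb (plus (u (phi n)) (v m)) p)); auto.
    + exact Hc1.
    + intro m. apply (cv_ext (fun n => xb (plus (u (phi n)) (v (psi m))) p)).
      intro; apply HA. apply (cv_sub (fun n => xb (plus (u n) (v (psi m))) p)); auto.
    + exact Hc2.
Qed.


Definition enD (n : nat) : {x | Delta x} :=
  match excluded_middle_informative (Delta (e n)) with
  | left H => exist _ (e n) H
  | right _ => exist _ zero Hz
  end.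

Definition en (n : nat) : Idx Delta := let (i, j) := Cantor.of_nat n in (enQ i, enD j).

Lemma en_surj p : exists n, en n = p.
Proof.
  destruct p as [q [x Hx]].
  destruct (enQ_surj q) as [i Hi]. destruct (He x Hx) as [j Hj].
  exists (Cantor.to_nat (i, j)). unfold en. rewrite Cantor.cancel_of_to. rewrite Hi.
  f_equal. unfold enD. destruct excluded_middle_informative as [h|h].
  - subst. f_equal. apply proof_irrelevance.
  - subst. contradiction.
Qed.

Definition FK (k : nat) : list (Idx Delta) := map en (seq 0 k).

Lemma FK_in p : exists j, forall k, (j < k)%nat -> In p (FK k).
Proof.
  destruct (en_surj p) as [j Hj]. exists j. intros k Hk. unfold FK. rewrite <- Hj.
  apply in_map. apply in_seq. lia.
Qed.

Lemma FK_mono K K' p : (K <= K')%nat -> In p (FK K) -> In p (FK K').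
Proof.
  intros H Hin. unfold FK in *. apply in_map_iff in Hin. destruct Hin as [n [<- Hn]].
  apply in_map. apply in_seq in Hn. apply in_seq. lia.
Qed.

Lemma list_cover (F : list (Idx Delta)) : exists K, forall k, (K <= k)%nat -> forall p, In p F -> In p (FK k).
Proof.
  induction F as [|q F [K HK]].
  - exists 0%nat. intros k _ p [].
  - destruct (FK_in q) as [j Hj]. exists (Nat.max K (S j)). intros k Hk p [<-|Hp].
    + apply Hj. lia.
    + apply HK; [lia | exact Hp].
Qed.

Lemma ev_list {A : Type} (F : list A) (P : A -> nat -> Prop) :
  (forall p, In p F -> exists N, forall n, (N <= n)%nat -> P p n) ->
  exists N, forall n, (N <= n)%nat -> forall p, In p F -> P p n.
Proof.
  induction F as [|q F IH]; intro H.
  - exists 0%nat. intros n _ p [].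
  - destruct (H q (or_introl eq_refl)) as [N1 HN1].
    destruct IH as [N2 HN2]. { intros p Hp. apply H. right. exact Hp. }
    exists (Nat.max N1 N2). intros n Hn p [<-|Hp].
    + apply HN1. lia.
    + apply HN2; [lia | exact Hp].
Qed.

Lemma exists_defseq s : inT scal d Delta s -> exists u, defining_seq scal d Delta u s.
Proof.
  intro Hs.
  destruct (fchoice (fun n x => Delta x /\ forall p, In p (FK n) -> Rabs (xbar scal d Delta x p - s p) < / INR (S n))) as [u Hu].
  { intro n. apply Hs. apply inv_pos. }
  exists u. split. intro n; apply Hu.
  intros p eps Hep. destruct (FK_in p) as [j Hj]. destruct (inv_small eps Hep) as [N HN].
  exists (Nat.max N (S j)). intros n Hn. unfold Rdist.
  destruct (Hu n) as [_ Hc]. specialize (Hc p (Hj n ltac:(lia))). specialize (HN n ltac:(lia)). lra.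
Qed.


Lemma cv_const (c : R) : Un_cv (fun _ => c) c.
Proof. intros eps Hep. exists 0%nat. intros. unfold Rdist. rewrite Rminus_diag, Rabs_R0. lra. Qed.

Lemma conv_exists s t : inT scal d Delta s -> inT scal d Delta t ->
  exists r, conv_spec plus scal d Delta s t r.
Proof.
  intros Hs Ht. destruct (exists_defseq s Hs) as [u0 Hu0]. destruct (exists_defseq t Ht) as [v0 Hv0].
  destruct (fchoice (fun p L => Un_cv (fun n => t (shx (u0 n) p)) L /\ Un_cv (fun m => s (shx (v0 m) p)) L)) as [r Hr].
  { intro p. apply (K1 u0 v0 s t p Hu0 Hv0). }
  exists r. intros u v Hu Hv. exists (fun n p => t (shx (u n) p)). split.
  - intros n p. apply (K1 u v s t p Hu Hv).
  - intro p. destruct (K1 u v0 s t p Hu Hv0) as [_ [_ [L [HL1 HL2]]]].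
    replace (r p) with L; auto. apply (UL_sequence _ _ _ HL2 (proj2 (Hr p))).
Qed.

Lemma conv_char s t u v : inT scal d Delta s -> inT scal d Delta t ->
  defining_seq scal d Delta u s -> defining_seq scal d Delta v t -> forall p,
  Un_cv (fun n => t (shx (u n) p)) (conv plus scal d Delta s t p) /\
  Un_cv (fun m => s (shx (v m) p)) (conv plus scal d Delta s t p).
Proof.
  intros Hs Ht Hu Hv p.
  pose proof (epsilon_spec (inhabits (fun _ : Idx Delta => 0)) (conv_spec plus scal d Delta s t)
                (conv_exists s t Hs Ht)) as Hc.
  change (epsilon _ _) with (conv plus scal d Delta s t) in Hc.
  destruct (Hc u v Hu Hv) as [g [Hg1 Hg2]].
  destruct (K1 u v s t p Hu Hv) as [Hi [_ [L [HL1 HL2]]]].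
  assert (Ha : Un_cv (fun n => t (shx (u n) p)) (conv plus scal d Delta s t p)).
  { apply (cv_ext (fun n => g n p)). intro n. apply (UL_sequence _ _ _ (Hg1 n p) (Hi n)).
    apply Hg2. }
  split; auto. replace (conv plus scal d Delta s t p) with L; auto.
  apply (UL_sequence _ _ _ HL1 Ha).
Qed.

Lemma conv_inT s t : inT scal d Delta s -> inT scal d Delta t ->
  inT scal d Delta (conv plus scal d Delta s t).
Proof.
  intros Hs Ht F eps Hep.
  destruct (exists_defseq s Hs) as [u Hu]. destruct (exists_defseq t Ht) as [v Hv].
  assert (He2 : eps / 2 > 0) by lra.
  destruct (ev_list F (fun p n => Rabs (t (shx (u n) p) - conv plus scal d Delta s t p) < eps / 2)) as [N HN].
  { intros p _. destruct (proj1 (conv_char s t u v Hs Ht Hu Hv p) _ He2) as [N HN].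
    exists N. intros n Hn. apply HN. lia. }
  destruct (ev_list F (fun p m => Rabs (xbar scal d Delta (plus (u N) (v m)) p - t (shx (u N) p)) < eps / 2)) as [M HM].
  { intros p _. destruct (proj1 (K1 u v s t p Hu Hv) N _ He2) as [M HM].
    exists M. intros n Hn. apply HM. lia. }
  exists (plus (u N) (v M)). split.
  - apply Hplus; [apply (proj1 Hu) | apply (proj1 Hv)].
  - intros p Hp. specialize (HN N (le_n _) p Hp). specialize (HM M (le_n _) p Hp).
    assert (Rabs (xbar scal d Delta (plus (u N) (v M)) p - conv plus scal d Delta s t p) <=
            Rabs (xbar scal d Delta (plus (u N) (v M)) p - t (shx (u N) p)) +
            Rabs (t (shx (u N) p) - conv plus scal d Delta s t p)).
    { eapply Rle_trans; [|apply Rabs_triang]. right. f_equal. ring. }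
    lra.
Qed.

Lemma conv_xb x t : Delta x -> inT scal d Delta t ->
  forall p, conv plus scal d Delta (xbar scal d Delta x) t p = t (shx x p).
Proof.
  intros Hx Ht p.
  assert (Hs : inT scal d Delta (xbar scal d Delta x)).
  { intros F eps Hep. exists x. split; auto. intros. rewrite Rminus_diag, Rabs_R0. lra. }
  destruct (exists_defseq t Ht) as [v Hv].
  assert (Hu : defining_seq scal d Delta (fun _ => x) (xbar scal d Delta x)).
  { split; auto. intro q. apply cv_const. }
  destruct (conv_char _ _ _ _ Hs Ht Hu Hv p) as [H1 _].
  apply (UL_sequence _ _ _ H1 (cv_const _)).
Qed.


Lemma Cont s t p eps : inT scal d Delta s -> inT scal d Delta t -> eps > 0 ->
  exists K, forall s', inT scal d Delta s' -> close_on (FK K) (/ INR (S K)) s s' ->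
    Rabs (conv plus scal d Delta s' t p - conv plus scal d Delta s t p) < eps.
Proof.
  intros Hs Ht Hep. set (c := conv plus scal d Delta s t p).
  apply NNPP; intro Hn.
  assert (H1 : forall K, exists s', inT scal d Delta s' /\ close_on (FK K) (/ INR (S K)) s s' /\
                 eps <= Rabs (conv plus scal d Delta s' t p - c)).
  { intro K. apply NNPP; intro H. apply Hn. exists K. intros s' Hs' Hcl.
    apply Rnot_le_lt. intro Hle. apply H. exists s'. auto. }
  destruct (fchoice _ H1) as [sK HsK].
  destruct (exists_defseq t Ht) as [v Hv].
  assert (H2 : forall K, exists x, Delta x /\ close_on (FK K) (/ INR (S K)) (sK K) (xbar scal d Delta x) /\
                 Rabs (t (shx x p) - conv plus scal d Delta (sK K) t p) < / INR (S K)).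
  { intro K. destruct (HsK K) as [HsK1 _].
    destruct (exists_defseq _ HsK1) as [u Hu].
    destruct (conv_char _ _ _ _ HsK1 Ht Hu Hv p) as [Ha _].
    destruct (ev_list (FK K) (fun q n => Rabs (xbar scal d Delta (u n) q - sK K q) < / INR (S K))) as [N1 HN1].
    { intros q _. destruct (proj2 Hu q _ (inv_pos K)) as [N HN]. exists N. intros n0 Hn0. apply HN. lia. }
    destruct (Ha _ (inv_pos K)) as [N2 HN2].
    exists (u (Nat.max N1 N2)). split; [apply (proj1 Hu)|]. split.
    - intros q Hq. apply HN1; [lia | exact Hq].
    - apply HN2. lia. }
  destruct (fchoice _ H2) as [xK HxK].
  assert (Hdef : defining_seq scal d Delta xK s).
  { split; [intro n; apply HxK|]. intros q eps' Hep'.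
    destruct (FK_in q) as [j Hj]. assert (Hh : eps' / 2 > 0) by lra.
    destruct (inv_small _ Hh) as [N HN]. exists (Nat.max N (S j)). intros n Hn0. unfold Rdist.
    destruct (HxK n) as [_ [Hc1 _]]. destruct (HsK n) as [_ [Hc2 _]].
    assert (Hin : In q (FK n)) by (apply Hj; lia).
    specialize (Hc1 q Hin). specialize (Hc2 q Hin). specialize (HN n ltac:(lia)).
    assert (Rabs (xbar scal d Delta (xK n) q - s q) <=
            Rabs (xbar scal d Delta (xK n) q - sK n q) + Rabs (sK n q - s q)).
    { eapply Rle_trans; [|apply Rabs_triang]. right. f_equal. ring. }
    lra. }
  destruct (conv_char _ _ _ _ Hs Ht Hdef Hv p) as [Hc _].
  assert (Hh : eps / 2 > 0) by lra.
  destruct (Hc _ Hh) as [N1 HN1]. destruct (inv_small _ Hh) as [N2 HN2].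
  set (n := Nat.max N1 N2).
  specialize (HN1 n ltac:(lia)). specialize (HN2 n ltac:(lia)). unfold Rdist in HN1.
  destruct (HxK n) as [_ [_ Hx3]]. destruct (HsK n) as [_ [_ Hs3]].
  fold c in HN1.
  assert (Rabs (conv plus scal d Delta (sK n) t p - c) <=
          Rabs (conv plus scal d Delta (sK n) t p - t (shx (xK n) p)) + Rabs (t (shx (xK n) p) - c)).
  { eapply Rle_trans; [|apply Rabs_triang]. right. f_equal. ring. }
  rewrite Rabs_minus_sym in Hx3. lra.
Qed.


Lemma close_mono K K' f g : (K <= K')%nat -> close_on (FK K') (/ INR (S K')) f g ->
  close_on (FK K) (/ INR (S K)) f g.
Proof.
  intros H Hc p Hp. eapply Rlt_le_trans. apply Hc. apply (FK_mono K); auto.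
  apply inv_le. exact H.
Qed.

Lemma ContV s t F eps : inT scal d Delta s -> inT scal d Delta t -> eps > 0 ->
  exists K, forall s', inT scal d Delta s' -> close_on (FK K) (/ INR (S K)) s s' ->
    close_on F eps (conv plus scal d Delta s t) (conv plus scal d Delta s' t).
Proof.
  intros Hs Ht Hep. induction F as [|q F [K2 HK2]].
  - exists 0%nat. intros s' _ _ p [].
  - destruct (Cont s t q eps Hs Ht Hep) as [K1 HK1].
    exists (Nat.max K1 K2). intros s' Hs' Hc p [<-|Hp].
    + apply HK1; auto. apply (close_mono K1 (Nat.max K1 K2)); auto. lia.
    + apply HK2; auto. apply (close_mono K2 (Nat.max K1 K2)); auto. lia.
Qed.

Lemma slack {A : Type} (F : list A) (a : A -> R) (eb : R) :
  (forall p, In p F -> Rabs (a p) < eb) -> exists e', e' > 0 /\ forall p, In p F -> Rabs (a p) + e' < eb.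
Proof.
  induction F as [|q F IH]; intro H.
  - exists 1. split; [lra|]. intros p [].
  - destruct IH as [e2 [He2 HF]]. { intros p Hp. apply H. right; exact Hp. }
    assert (Hq : Rabs (a q) < eb) by (apply H; left; reflexivity).
    exists (Rmin ((eb - Rabs (a q)) / 2) e2). split.
    + apply Rmin_pos; lra.
    + intros p [<-|Hp].
      * pose proof (Rmin_l ((eb - Rabs (a q)) / 2) e2). lra.
      * pose proof (Rmin_r ((eb - Rabs (a q)) / 2) e2). specialize (HF p Hp). lra.
Qed.

Lemma abs_tri3 a b c : Rabs (a - c) <= Rabs (a - b) + Rabs (b - c).
Proof. eapply Rle_trans; [|apply Rabs_triang]. right. f_equal. ring. Qed.

Definition Cl (V : (Idx Delta -> R) -> Prop) (k : nat) (g : Idx Delta -> R) : Prop :=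
  forall h, close_on (FK k) (/ INR (S k)) g h -> V h.

Definition Gx (x : X) (t : Idx Delta -> R) : Idx Delta -> R := fun p => t (shx x p).

Definition Ck (V : (Idx Delta -> R) -> Prop) (k : nat) (s t : Idx Delta -> R) : Prop :=
  forall x, Delta x -> close_on (FK k) (/ INR (S k)) (xbar scal d Delta x) s -> Cl V k (Gx x t).

Lemma Ck_closed V k : closed_pair (Ck V k).
Proof.
  intros s t Hn.
  assert (Hx : exists x, Delta x /\ close_on (FK k) (/ INR (S k)) (xbar scal d Delta x) s /\
             exists h, close_on (FK k) (/ INR (S k)) (Gx x t) h /\ ~ V h).
  { apply NNPP. intro H. apply Hn. intros x Hx Hc h Hh. apply NNPP. intro HV'.
    apply H. exists x. split; auto. split; auto. exists h. auto. }
  destruct Hx as [x [Hx [Hc [h [Hh HnV]]]]].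
  destruct (slack (FK k) (fun p => s p - xbar scal d Delta x p) _ Hc) as [e1 [He1 H1]].
  destruct (slack (FK k) (fun p => h p - Gx x t p) _ Hh) as [e2 [He2 H2]].
  exists (FK k), (map (shx x) (FK k)), (Rmin e1 e2). split; [apply Rmin_pos; auto|].
  intros g1 g2 Hg1 Hg2 HC.
  apply HnV. apply (HC x Hx).
  - intros p Hp. specialize (H1 p Hp). specialize (Hg1 p Hp). cbv beta in H1.
    pose proof (Rmin_l e1 e2). pose proof (abs_tri3 (g1 p) (s p) (xbar scal d Delta x p)). lra.
  - intros p Hp. specialize (H2 p Hp). cbv beta in H2.
    specialize (Hg2 (shx x p) (in_map _ _ _ Hp)).
    pose proof (Rmin_r e1 e2). unfold Gx in *.
    pose proof (abs_tri3 (h p) (t (shx x p)) (g2 (shx x p))) as T.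
    rewrite (Rabs_minus_sym (t (shx x p))) in T. lra.
Qed.


Lemma close_sym {A : Type} (F : list A) eps f g : close_on F eps f g -> close_on F eps g f.
Proof. intros H p Hp. rewrite Rabs_minus_sym. apply H, Hp. Qed.

Lemma inT_xb x : Delta x -> inT scal d Delta (xbar scal d Delta x).
Proof. intros Hx F eps Hep. exists x. split; auto. intros. rewrite Rminus_diag, Rabs_R0. lra. Qed.

Lemma baire_main V : open_fun V ->
  exists C : nat -> (Idx Delta -> R) -> (Idx Delta -> R) -> Prop,
    (forall k, closed_pair (C k)) /\
    (forall s t, inT scal d Delta s -> inT scal d Delta t ->
       (V (conv plus scal d Delta s t) <-> exists k, C k s t)).
Proof.
  intro HVo. exists (Ck V). split; [apply Ck_closed|].
  intros s t Hs Ht. split.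
  - intro Hv. destruct (HVo _ Hv) as [F [eps [Hep HF]]].
    assert (He2 : eps / 2 > 0) by lra.
    destruct (ContV s t F (eps / 2) Hs Ht He2) as [K1 HK1].
    destruct (list_cover F) as [K2 HK2].
    destruct (inv_small _ He2) as [K3 HK3].
    set (k := Nat.max K1 (Nat.max K2 K3)).
    exists k. intros x Hx Hcl h Hh. apply HF. intros p Hp.
    assert (Hc := HK1 (xbar scal d Delta x) (inT_xb x Hx)
                   (close_mono K1 k _ _ ltac:(lia) (close_sym _ _ _ _ Hcl)) p Hp).
    assert (HpK : In p (FK k)) by (apply (HK2 k); [lia | exact Hp]).
    specialize (Hh p HpK). unfold Gx in Hh. rewrite <- (conv_xb x t Hx Ht p) in Hh.
    specialize (HK3 k ltac:(lia)).
    pose proof (abs_tri3 (h p) (conv plus scal d Delta (xbar scal d Delta x) t p)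
                  (conv plus scal d Delta s t p)). lra.
  - intros [k Hk].
    destruct (ContV s t (FK k) (/ INR (S k)) Hs Ht (inv_pos k)) as [K1 HK1].
    destruct (Hs (FK k ++ FK K1) (Rmin (/ INR (S k)) (/ INR (S K1)))) as [x [Hx Hxc]].
    { apply Rmin_pos; apply inv_pos. }
    assert (Hc1 : close_on (FK k) (/ INR (S k)) (xbar scal d Delta x) s).
    { intros p Hp. rewrite Rabs_minus_sym. eapply Rlt_le_trans.
      apply Hxc. apply in_or_app; left; exact Hp. apply Rmin_l. }
    assert (Hc2 : close_on (FK K1) (/ INR (S K1)) s (xbar scal d Delta x)).
    { intros p Hp. eapply Rlt_le_trans.
      apply Hxc. apply in_or_app; right; exact Hp. apply Rmin_r. }
    apply (Hk x Hx Hc1).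
    intros p Hp. unfold Gx. rewrite <- (conv_xb x t Hx Ht p).
    rewrite Rabs_minus_sym. apply (HK1 _ (inT_xb x Hx) Hc2 p Hp).
Qed.

End Main.



Theorem corollary4p6
  (X : Type) (plus : X -> X -> X) (scal : R -> X -> X) (zero : X) (norm : X -> R)
  (d : X -> X -> R) (Delta : X -> Prop)
  (HB : is_banach plus scal zero norm)
  (Hsep : norm_separable plus scal norm)
  (Hinf : infinite_dimensional plus scal zero)
  (Hd : is_pseudometric d)
  (Hti : translation_invariant plus d)
  (Hst : stable d)
  (Hce : id_coarse_equivalence plus scal norm d)
  (HDelta : countable_dense_Qsubspace plus scal zero norm Delta) :
  (forall s t, inT scal d Delta s -> inT scal d Delta t ->
      inT scal d Delta (conv plus scal d Delta s t)) /\
  baire1_on (inT scal d Delta) (conv plus scal d Delta).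
Proof.
  destruct HB as [HV _].
  destruct HDelta as [Hz [Hpl [Hsc [[e He] _]]]].
  split.
  - intros s t Hs Ht. exact (conv_inT plus scal zero d Delta HV Hd Hti Hst Hz Hpl Hsc e He s t Hs Ht).
  - intros V HVo. exact (baire_main plus scal zero d Delta HV Hd Hti Hst Hz Hpl Hsc e He V HVo).
Qed.
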